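(* Let $\mathbf{M}=(M_1,\dots,M_n)$ be a POVM on $\mathbb{C}^d$ with all nonzero effects of rank one, which is an extreme point of the convex set of $n$-outcome POVMs on $\mathbb{C}^d$. Then there exist a POVM $\mathbf{M}'=(M'_1,\dots,M'_{n'})$ on $\mathbb{C}^d$ and a classical post-processing $\mathcal{Q}$ with $\mathbf{M}=\mathcal{Q}(\mathbf{M}')$ such that (i) $n'\le2d^2$, and (ii) for every $j\in[n']$, $M'_j=\alpha'_j\ket{\psi_j}\bra{\psi_j}$ with a unit vector $\ket{\psi_j}$ and $0\le\alpha'_j\le\frac1d$.
   Context: A POVM on $\mathbb{C}^d$ is a tuple of positive semidefinite operators summing to $\mathbb{I}_d$; convex combinations are taken effect-wise. A classical post-processing $\mathcal{Q}$ is given by numbers $q_{i|j}\ge0$ with $\sum_iq_{i|j}=1$, and $\mathcal{Q}(\mathbf{M}')$ has effects $\sum_jq_{i|j}M'_j$. *)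

(* Defs.v *)
From HB Require Import structures.
From mathcomp Require Import all_boot all_order all_algebra.
From mathcomp Require Import complex reals.
Set Implicit Arguments.
Unset Strict Implicit.
Unset Printing Implicit Defensive.
Import Order.TTheory GRing.Theory Num.Theory.
Local Open Scope ring_scope.

Definition adjmx (C : numClosedFieldType) (m n : nat) (A : 'M[C]_(m, n)) : 'M[C]_(n, m) :=
  (map_mx Num.conj A)^T.

Definition psd (C : numClosedFieldType) (d : nat) (A : 'M[C]_d) : Prop :=
  adjmx A = A /\ forall v : 'cV[C]_d, 0 <= (adjmx v *m A *m v) 0 0.

Definition is_povm (C : numClosedFieldType) (d n : nat) (M : 'I_n -> 'M[C]_d) : Prop :=
  (forall i, psd (M i)) /\ \sum_(i < n) M i = 1%:M.

Definition povm_comb (C : numClosedFieldType) (d n : nat) (t : C)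
  (M1 M2 : 'I_n -> 'M[C]_d) : 'I_n -> 'M[C]_d :=
  fun i => t *: M1 i + (1 - t) *: M2 i.

Definition extreme_povm (C : numClosedFieldType) (d n : nat) (M : 'I_n -> 'M[C]_d) : Prop :=
  is_povm M /\
  forall (M1 M2 : 'I_n -> 'M[C]_d) (t : C),
    is_povm M1 -> is_povm M2 -> 0 < t -> t < 1 ->
    (forall i, M i = povm_comb t M1 M2 i) -> (forall i, M1 i = M i) /\ (forall i, M2 i = M i).

Definition is_postproc (C : numClosedFieldType) (n n' : nat) (q : 'I_n -> 'I_n' -> C) : Prop :=
  (forall i j, 0 <= q i j) /\ (forall j, \sum_(i < n) q i j = 1).

Definition postproc (C : numClosedFieldType) (d n n' : nat) (q : 'I_n -> 'I_n' -> C)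
  (M' : 'I_n' -> 'M[C]_d) : 'I_n -> 'M[C]_d :=
  fun i => \sum_(j < n') q i j *: M' j.

(* Main.v *)
Require Import Defs.
From HB Require Import structures.
From mathcomp Require Import all_boot all_order all_algebra.
From mathcomp Require Import complex reals.
From mathcomp Require Import ring.
Set Implicit Arguments.
Import Order.TTheory GRing.Theory Num.Theory.
Local Open Scope ring_scope.

Section Adj.
Variable C : numClosedFieldType.

Lemma adjmxE m n (A : 'M[C]_(m, n)) i j : adjmx A i j = (A j i)^*.
Proof. by rewrite /adjmx !mxE. Qed.

Lemma adjmxK m n (A : 'M[C]_(m, n)) : adjmx (adjmx A) = A.
Proof. by apply/matrixP=> i j; rewrite !adjmxE conjCK. Qed.

Lemma adjmxM m n p (A : 'M[C]_(m, n)) (B : 'M[C]_(n, p)) :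
  adjmx (A *m B) = adjmx B *m adjmx A.
Proof.
apply/matrixP=> i j; rewrite adjmxE !mxE rmorph_sum; apply: eq_bigr => k _.
by rewrite rmorphM !adjmxE mulrC.
Qed.

Lemma adjmxZ m n a (A : 'M[C]_(m, n)) : adjmx (a *: A) = a^* *: adjmx A.
Proof. by apply/matrixP=> i j; rewrite /adjmx !mxE rmorphM. Qed.

Lemma adjmxD m n (A B : 'M[C]_(m, n)) : adjmx (A + B) = adjmx A + adjmx B.
Proof. by apply/matrixP=> i j; rewrite /adjmx !mxE rmorphD. Qed.

Lemma adjmx0 m n : adjmx (0 : 'M[C]_(m, n)) = 0.
Proof. by apply/matrixP=> i j; rewrite /adjmx !mxE rmorph0. Qed.

Lemma adjmx_sum (I : finType) m n (F : I -> 'M[C]_(m, n)) :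
  adjmx (\sum_i F i) = \sum_i adjmx (F i).
Proof.
elim/big_rec2: _ => [|i x y _ <-]; first exact: adjmx0.
by rewrite adjmxD.
Qed.

Lemma adjmx1 n : adjmx (1%:M : 'M[C]_n) = 1%:M.
Proof. by apply/matrixP=> i j; rewrite /adjmx !mxE eq_sym; case: eqP; rewrite ?conjC1 ?conjC0. Qed.

Lemma psdZ d a (A : 'M[C]_d) : 0 <= a -> psd A -> psd (a *: A).
Proof.
move=> a0 [hA qA]; split; first by rewrite adjmxZ hA conj_Creal // ger0_real.
by move=> v; rewrite -scalemxAr -scalemxAl mxE mulr_ge0.
Qed.

Lemma psd_rank1 d (phi : 'cV[C]_d) : psd (phi *m adjmx phi).
Proof.
split; first by rewrite adjmxM adjmxK.
move=> v; rewrite mulmxA -mulmxA.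
have -> : adjmx v *m phi = adjmx (adjmx phi *m v) by rewrite adjmxM adjmxK.
set w := adjmx phi *m v.
rewrite !mxE big_ord1 adjmxE mulrC; exact: mul_conjC_ge0.
Qed.


Lemma extreme_real_indep d n (M : 'I_n -> 'M[C]_d) (c : 'I_n -> C) :
  extreme_povm M -> (forall k, c k \is Num.real) ->
  \sum_k c k *: M k = 0 -> forall k, c k *: M k = 0.
Proof.
case=> -[psdM sumM] ext creal hc k.
pose s := 1 + \sum_k `|c k|.
have sge : forall k, `|c k| <= s.
  move=> k0; rewrite /s (bigD1 k0) //= addrCA lerDl.
  by apply: addr_ge0 => //; apply: sumr_ge0 => j _.
have s_gt0 : 0 < s by rewrite /s ltr_wpDr //; apply: sumr_ge0 => j _.
pose e := s^-1.
have e_gt0 : 0 < e by rewrite invr_gt0.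
have bound : forall k, - 1 <= e * c k <= 1.
  move=> k0; rewrite -real_ler_norml ?realM ?creal ?gtr0_real //.
  by rewrite normrM (gtr0_norm e_gt0) mulrC ler_pdivrMr // mul1r.
pose M1 := fun k => (1 + e * c k) *: M k.
pose M2 := fun k => (1 - e * c k) *: M k.
have povm_pm : forall sg : C, (sg = 1 \/ sg = -1) ->
    is_povm (fun k => (1 + sg * (e * c k)) *: M k).
  move=> sg hsg; split.
    move=> k0; apply: psdZ (psdM k0); have /andP[h1 h2] := bound k0.
    case: hsg => ->; first by rewrite mul1r addrC -lerBlDr sub0r.
    by rewrite mulN1r subr_ge0.
  rewrite (eq_bigr (fun k => M k + (sg * e) *: (c k *: M k))); last first.
    by move=> k0 _; rewrite scalerDl scale1r !scalerA mulrA.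
  by rewrite big_split /= -scaler_sumr hc scaler0 addr0.
have hM1 := povm_pm 1 (or_introl erefl).
have hM2 := povm_pm (-1) (or_intror erefl).
have [] := ext _ _ (2^-1) hM1 hM2.
- by rewrite invr_gt0 ltr0n.
- by rewrite invf_lt1 ?ltr0n // ltr1n.
- move=> k0; rewrite /povm_comb !scalerA -scalerDl.
  suff -> : 2^-1 * (1 + 1 * (e * c k0)) + (1 - 2^-1) * (1 + -1 * (e * c k0)) = 1
    by rewrite scale1r.
  by field.
move=> /(_ k) h1 _.
move/eqP: h1; rewrite mul1r scalerDl scale1r addrC -subr_eq0 addrK.
by rewrite -scalerA scaler_eq0 (negbTE (lt0r_neq0 e_gt0)) => /eqP.
Qed.


Lemma psd_herm d (A : 'M[C]_d) : psd A -> adjmx A = A.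
Proof. by case. Qed.

Lemma extreme_indep d n (M : 'I_n -> 'M[C]_d) (c : 'I_n -> C) :
  extreme_povm M -> \sum_k c k *: M k = 0 -> forall k, c k *: M k = 0.
Proof.
move=> ext hc k.
have herm : forall k, adjmx (M k) = M k by move=> k0; apply: psd_herm; case: ext => -[+ _] _; apply.
have hc' : \sum_k (c k)^* *: M k = 0.
  move: (congr1 (@adjmx _ _ _) hc); rewrite adjmx0 adjmx_sum => h; rewrite -[RHS]h.
  by apply: eq_bigr => k0 _; rewrite adjmxZ herm.
pose a k := c k + (c k)^*.
pose b k := 'i * (c k - (c k)^*).
have ii : 'i * 'i = -1 :> C by rewrite -expr2 sqrCi.
have ha : forall k, a k *: M k = 0.
  apply: extreme_real_indep => //.
    by move=> k0; rewrite CrealE /a rmorphD /= conjCK addrC.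
  by rewrite /a (eq_bigr (fun k => c k *: M k + (c k)^* *: M k)) ?big_split /= ?hc ?hc' ?addr0 // => k0 _; rewrite scalerDl.
have hb : forall k, b k *: M k = 0.
  apply: extreme_real_indep => //.
    move=> k0; rewrite CrealE /b rmorphM rmorphB /= conjCK conjCi; apply/eqP.
    by rewrite mulNr -mulrN opprB.
  rewrite /b (eq_bigr (fun k => 'i *: (c k *: M k - (c k)^* *: M k))).
    by rewrite -scaler_sumr sumrB hc hc' subr0 scaler0.
  by move=> k0 _; rewrite -scalerBl scalerA.
have -> : c k = 2^-1 * a k - 2^-1 * 'i * b k.
  rewrite /a /b (mulrA (2^-1 * 'i)) -(mulrA 2^-1 'i 'i) ii.
  by field.
have := ha k; have := hb k; move: (a k) (b k) => A B hB hA.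
by rewrite scalerBl -!scalerA hA hB !scaler0 subr0.
Qed.

Lemma extreme_card d n (M : 'I_n -> 'M[C]_d) :
  extreme_povm M -> (#|[set k | M k != 0%R]| <= d * d)%N.
Proof.
move=> ext; set S := [set k | M k != 0].
pose X := [tuple M (enum_val (A := S) i) | i < #|S|].
have freeX : free X.
  apply/freeP => kk hk i.
  pose c' x := \sum_(j < #|S| | enum_val (A := S) j == x) kk j.
  have hs : \sum_x c' x *: M x = 0.
    rewrite -[RHS]hk (partition_big (fun j => enum_val (A := S) j) predT) //=.
    apply: eq_bigr => x _; rewrite scaler_suml; apply: eq_bigr => j /eqP <-.
    by rewrite nth_mktuple.
  have := @extreme_indep _ _ M c' ext hs (enum_val i).
  have -> : c' (enum_val i) = kk i.
    rewrite /c' (eq_bigl (fun j => j == i)) ?big_pred1_eq // => j.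
    by rewrite (inj_eq enum_val_inj).
  move/eqP; rewrite scaler_eq0; have := enum_valP i; rewrite inE => /negbTE ->.
  by rewrite orbF => /eqP.
have <- : size X = #|S| by rewrite size_tuple.
move/eqP: freeX => <-.
apply: leq_trans (dimvS (subvf _)) _; by rewrite dimvf dim_matrix.
Qed.


Lemma rank1_decomp d (A : 'M[C]_d) : psd A -> \rank A = 1%N ->
  exists (c : C) (phi : 'cV[C]_d),
    [/\ (adjmx phi *m phi) 0 0 = 1, A = c *: (phi *m adjmx phi) & 0 <= c].
Proof.
move=> [hA qA] r1.
have A0 : A != 0 by rewrite -mxrank_eq0 r1.
have [i0 w0] : exists i0, row i0 A != 0.
  case: (pickP (fun i => row i A != 0)) => [i hi|h]; first by exists i.
  have Az : A = 0.
    apply/row_matrixP => i; move/negbFE: (h i) => /eqP ->; by rewrite row0.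
  by rewrite Az eqxx in A0.
set w := row i0 A.
have rw : \rank w = 1%N.
  by apply/eqP; rewrite eqn_leq rank_leq_row lt0n mxrank_eq0 w0.
have /andP[_ sAw] : (w == A)%MS by rewrite -(mxrank_leqif_eq (row_sub i0 A)).2 rw r1.
have [D hD] := submxP sAw.
set u := adjmx w.
set n2 := (w *m u) 0 0.
have n2_ge0 : 0 <= n2.
  rewrite /n2 mxE; apply: sumr_ge0 => j _; rewrite /u adjmxE; exact: mul_conjC_ge0.
have n2_gt0 : 0 < n2.
  rewrite lt_def n2_ge0 andbT; apply/eqP => h0; move/eqP: w0; apply.
  have h1 := psumr_eq0P (fun j _ => mul_conjC_ge0 (w 0 j)).
  apply/rowP => j; rewrite [RHS]mxE; apply/eqP; rewrite -mul_conjC_eq0; apply/eqP.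
  by apply: (h1 xpredT) => //; rewrite -[RHS]h0 /n2 mxE; apply: eq_bigr => k _; rewrite /u adjmxE.
set s := (adjmx D *m u) 0 0.
have e1 : A *m u = n2 *: D.
  by rewrite hD -mulmxA [w *m u]mx11_scalar mul_mx_scalar.
have e2 : A *m u = s *: u.
  by rewrite -hA hD adjmxM -/u -mulmxA [adjmx D *m u]mx11_scalar mul_mx_scalar.
have n2_neq0 : n2 != 0 by rewrite gt_eqF.
have hD' : D = (s / n2) *: u.
  apply: (scalerI n2_neq0); rewrite -e1 e2 scalerA mulrCA mulfV // mulr1 //.
set r := sqrtC n2.
have r_gt0 : 0 < r by rewrite sqrtC_gt0.
have r_neq0 : r != 0 by rewrite gt_eqF.
have rr : r * r = n2 by rewrite -expr2 sqrtCK.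
have rc : (r^-1)^* = r^-1 by rewrite conj_Creal // realV gtr0_real.
set phi := r^-1 *: u.
have hphi : (adjmx phi *m phi) 0 0 = 1.
  rewrite adjmxZ rc -scalemxAl -scalemxAr scalerA /u adjmxK mxE -/n2 -invfM rr.
  by rewrite mulVf.
have hA' : A = s *: (phi *m adjmx phi).
  rewrite {1}hD hD' adjmxZ rc /u adjmxK -scalemxAl -scalemxAr scalerA.
  by rewrite -scalemxAl scalerA -mulrA -invfM rr.
have p1 : adjmx phi *m phi = 1%:M by rewrite [LHS]mx11_scalar hphi.
exists s, phi; split => //.
have := qA phi; clearbody phi; rewrite hA' -scalemxAr -scalemxAl mxE mulmxA p1 mul1mx p1.
by rewrite mxE eqxx mulr1.
Qed.

End Adj.
Lemma cfloor (R : realType) (x : R[i]) : 0 <= x -> exists t : nat, t%:R <= x < t.+1%:R.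
Proof.
move=> x0; have xr := ger0_real x0.
have hx : real_complex R (complex.Re x) = x by apply: RRe_real.
have rx : 0 <= complex.Re x by rewrite -ler0c hx.
exists (Num.trunc (complex.Re x)); rewrite -hx -!(rmorph_nat (real_complex R)) !lecR !ltcR.
exact: truncn_itv.
Qed.

Lemma sum_tag (V : nmodType) n (m : 'I_n -> nat) (G : 'I_n -> V) :
  \sum_(j < #|{: {k : 'I_n & 'I_(m k)}}|) G (tag (enum_val j)) = \sum_k G k *+ m k.
Proof.
rewrite -(big_enum_val (fun x : {k : 'I_n & 'I_(m k)} => G (tag x))).
rewrite (eq_bigl xpredT) //.
rewrite -(@sig_big_dep _ _ _ _ (fun k => 'I_(m k)) xpredT (fun _ => xpredT) (fun i _ => G i)) /=.
by apply: eq_bigr => k _; rewrite sumr_const card_ord.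
Qed.

Lemma card_tag n (m : 'I_n -> nat) : #|{: {k : 'I_n & 'I_(m k)}}| = (\sum_k m k)%N.
Proof. by rewrite card_tagged sumnE big_map big_enum; apply: eq_bigr => k _; rewrite card_ord. Qed.

Unset Implicit Arguments.

Theorem lemma8 (R : realType) (d n : nat) (M : 'I_n -> 'M[R[i]]_d) :
  is_povm M ->
  (forall k, M k != 0 -> \rank (M k) = 1%N) ->
  extreme_povm M ->
  exists (n' : nat) (M' : 'I_n' -> 'M[R[i]]_d) (q : 'I_n -> 'I_n' -> R[i]),
    [/\ is_povm M', is_postproc q, (forall k, M k = postproc q M' k),
        (n' <= 2 * d ^ 2)%N &
        forall j : 'I_n', exists (alpha : R[i]) (psi : 'cV[R[i]]_d),
          [/\ (adjmx psi *m psi) 0 0 = 1, M' j = alpha *: (psi *m adjmx psi),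
              0 <= alpha & alpha <= d%:R^-1]].
Proof.
move=> povm r1 ext.
have hS := extreme_card ext.
have [psdM sumM] := povm.
have hdec : forall k, exists p : R[i] * 'cV[R[i]]_d * nat,
   [/\ M k = p.1.1 *: (p.1.2 *m adjmx p.1.2), 0 <= p.1.1, \tr (M k) = p.1.1,
       (M k != 0 -> (adjmx p.1.2 *m p.1.2) 0 0 = 1) &
       (p.2%:R <= p.1.1 * d%:R < p.2.+1%:R)].
  move=> k; case: (eqVneq (M k) 0) => [->|nz].
    exists (0, 0, 0%N); rewrite /= scale0r mxtrace0 mul0r lexx ltr01.
    by split.
  have [c [phi [h1 h2 h3]]] := rank1_decomp (psdM k) (r1 k nz).
  have [t ht] := @cfloor R _ (mulr_ge0 h3 (ler0n _ d)).
  exists (c, phi, t); split => //=.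
  by rewrite h2 mxtraceZ mxtrace_mulC [adjmx phi *m phi]mx11_scalar h1 mxtrace1 mulr1.
have [p hp] := fin_all_exists hdec.
pose c k := (p k).1.1.
pose phi k := (p k).1.2.
pose m k := if M k == 0 then 0%N else (p k).2.+1.
pose T := {k : 'I_n & 'I_(m k)}.
pose alpha k := c k / (m k)%:R.
pose P k := phi k *m adjmx (phi k).
have hM : forall k, M k = (alpha k *: P k) *+ m k.
  move=> k; case: (hp k) => hMk _ _ _ _; rewrite /alpha /m; case: eqP => [->|nz].
    by rewrite mulr0n.
  rewrite -scaler_nat scalerA mulrCA mulfV ?mulr1 //.
  by rewrite pnatr_eq0.
exists #|{: T}|, (fun j => alpha (tag (enum_val j)) *: P (tag (enum_val j))),
  (fun k j => (tag (enum_val j) == k)%:R).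
split.
- split.
    move=> j; apply: psdZ; last exact: psd_rank1.
    by rewrite /alpha divr_ge0 ?ler0n //; case: (hp (tag (enum_val j))).
  rewrite (@sum_tag _ n m (fun k => alpha k *: P k)) -sumM; apply: eq_bigr => k _.
  by rewrite hM.
- split; first by move=> k j; exact: ler0n.
  move=> j; rewrite (bigD1 (tag (enum_val j))) //= eqxx big1 ?addr0 // => k.
  by rewrite eq_sym => /negbTE ->.
- move=> k; rewrite /postproc.
  rewrite (eq_bigr (fun j => ((tag (enum_val j) == k)%:R * alpha (tag (enum_val j))) *: P (tag (enum_val j)))); last by move=> j _; rewrite scalerA.
  rewrite (@sum_tag _ n m (fun k' => ((k' == k)%:R * alpha k') *: P k')).
  rewrite (bigD1 k) //= eqxx mul1r big1 ?addr0 -?hM // => k' /negbTE ->.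
  by rewrite mul0r scale0r mul0rn.
- rewrite card_tag.
  have key : forall k, (m k)%:R <= c k * d%:R + (M k != 0)%:R :> R[i].
    move=> k; case: (hp k) => _ c0 _ _ /andP[h _]; rewrite /m; case: eqP => [h0|nz] /=.
      by rewrite addr0 mulr_ge0 ?ler0n.
    by rewrite -addn1 natrD lerD2r.
  have sc : \sum_k c k = d%:R.
    rewrite -(mxtrace1 _ d) -sumM raddf_sum; apply: eq_bigr => k _.
    by case: (hp k).
  have sb : \sum_k ((M k != 0)%:R : R[i]) = #|[set k | M k != 0%R]|%:R.
    rewrite -sum1_card natr_sum [RHS]big_mkcond /=; apply: eq_bigr => k _.
    by rewrite inE; case: (M k != 0).
  have : ((\sum_k m k)%:R : R[i]) <= (d * d + d * d)%:R.
    rewrite natr_sum; apply: le_trans (ler_sum _ (fun k _ => key k)) _.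
    by rewrite big_split /= -mulr_suml sc sb natrD natrM lerD2l -natrM ler_nat.
  rewrite ler_nat => h; apply: (leq_trans h).
  by rewrite mul2n -addnn -mulnn.
- move=> j; set k := tag (enum_val j).
  have mk : (0 < m k)%N := leq_ltn_trans (leq0n _) (ltn_ord (tagged (enum_val j))).
  have nz : M k != 0 by move: mk; rewrite /m; case: eqP.
  case: (hp k) => _ c0 _ hu /andP[_ hlt].
  have d0 : (0 < d)%N.
    rewrite lt0n; apply: contraNneq nz => d0.
    apply/eqP/matrixP => i0 j0; suff : False by []; have := ltn_ord i0; move: (nat_of_ord i0) => x; by rewrite d0.
  exists (alpha k), (phi k); split => //.
  + exact: hu.
  + by rewrite /alpha divr_ge0 ?ler0n.
  rewrite /alpha /m (negbTE nz) ler_pdivrMr ?ltr0n // ler_pdivlMl ?ltr0n //.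
  by rewrite mulrC ltW.
Qed.
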